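(* (a) If $G\in\mathcal U$ has at least one support vertex $s$, then the graph $G'$ obtained from $G$ by adding a new vertex $w$ and the edge $sw$ is also in $\mathcal U$. (b) If $G\in\mathcal U$ has a strong support vertex $s$ and $w$ is a leaf adjacent to $s$, then $G-w\in\mathcal U$.
   Context: All graphs are finite and simple. A set $P\subseteq V(G)$ is an open packing if no two distinct vertices of $P$ have a common neighbor; it is maximal if maximal under inclusion among open packings. $\rho^o(G)$ is the maximum size of an open packing and $\rho^o_L(G)$ the minimum size of a maximal open packing; $\mathcal U$ is the class of graphs with $\rho^o_L(G)=\rho^o(G)$. A leaf is a vertex of degree $1$, a support vertex is a vertex adjacent to at least one leaf, and a strong support vertex is one adjacent to at least two leaves. *)

(* Defs.v *)
From mathcomp Require Import all_boot.
Set Implicit Arguments. Unset Strict Implicit. Unset Printing Implicit Defensive.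

(* A finite simple graph is a finType T with a symmetric irreflexive
   adjacency relation e : rel T. *)

Section OpenPacking.
Variables (T : finType) (e : rel T).

Definition open_packing (P : {set T}) : bool :=
  [forall u in P, forall v in P,
     (u != v) ==> ~~ [exists x, e u x && e v x]].

Definition maximal_open_packing (P : {set T}) : bool :=
  open_packing P && [forall Q : {set T}, (P \proper Q) ==> ~~ open_packing Q].

Definition rho_o : nat := \max_(P : {set T} | open_packing P) #|P|.

(* rho^o_L(G): minimum size of a maximal open packing
   (maximal open packings always exist and have size <= #|T|) *)
Definition rho_oL : nat :=
  \big[minn/#|T|]_(P : {set T} | maximal_open_packing P) #|P|.

Definition in_U : bool := rho_oL == rho_o.

Definition leaf (v : T) : bool := #|[set x | e v x]| == 1.
Definition support_vertex (s : T) : bool := [exists v, e s v && leaf v].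
Definition strong_support_vertex (s : T) : bool :=
  1 < #|[set v | e s v && leaf v]|.

End OpenPacking.

Definition add_pendant (T : finType) (e : rel T) (s : T) : rel (option T) :=
  fun x y => match x, y with
             | Some a, Some b => e a b
             | None, Some b => b == s
             | Some a, None => a == s
             | None, None => false
             end.

Definition del_vertex (T : finType) (e : rel T) (w : T) : rel {x : T | x != w} :=
  fun x y => e (val x) (val y).
Arguments del_vertex {T} e w.
Arguments add_pendant {T} e s.

(* Main.v *)
Require Import Defs.
From mathcomp Require Import all_boot.
Set Implicit Arguments. Unset Strict Implicit. Unset Printing Implicit Defensive.

Section Gen.
Variable T : finType.
Variable c : rel T.
Definition opk (P : {set T}) : bool :=
  [forall u in P, forall v in P, (u != v) ==> ~~ c u v].
Definition mopk (P : {set T}) : bool :=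
  opk P && [forall Q : {set T}, (P \proper Q) ==> ~~ opk Q].
Definition rhoG : nat := \max_(P : {set T} | opk P) #|P|.
Definition rhoLG : nat := \big[minn/#|T|]_(P : {set T} | mopk P) #|P|.

Lemma opkP (P : {set T}) : reflect (forall u v, u \in P -> v \in P -> u != v -> ~~ c u v) (opk P).
Proof.
apply: (iffP forallP) => [H u v uP vP nuv | H u].
  by move: (H u); rewrite uP /= => /forallP /(_ v); rewrite vP nuv.
apply/implyP => uP; apply/forallP => v; apply/implyP => vP; apply/implyP => nuv.
exact: H.
Qed.

Lemma mopkP (P : {set T}) : reflect (opk P /\ forall Q : {set T}, P \proper Q -> ~~ opk Q) (mopk P).
Proof.
apply: (iffP andP) => [[H /forallP H2]|[H H2]]; split=> //.
  by move=> Q PQ; exact: (implyP (H2 Q) PQ).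
by apply/forallP => Q; apply/implyP; exact: H2.
Qed.

Lemma opk0 : opk set0.
Proof. by apply/opkP => u v; rewrite inE. Qed.

Lemma rhoG_ge (P : {set T}) : opk P -> #|P| <= rhoG.
Proof. move=> H; exact: (@leq_bigmax_cond _ opk (fun P : {set T} => #|P|) P H). Qed.

Lemma rhoG_att : exists2 P, opk P & rhoG = #|P|.
Proof.
have H0 : 0 < #|opk|.
  by apply/card_gt0P; exists set0; exact: opk0.
case: (@eq_bigmax_cond _ opk (fun P => #|P|) H0) => P HP E.
by exists P.
Qed.

Lemma bigmin_le (I : finType) (Pr : pred I) (F : I -> nat) x0 i :
  Pr i -> \big[minn/x0]_(j | Pr j) F j <= F i.
Proof.
move=> Pi; move: (mem_index_enum i).
elim: (index_enum I) => [|j r IH] //.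
rewrite inE big_cons => /orP [/eqP <- | ir].
  by rewrite Pi geq_minl.
case: (Pr j); last exact: IH.
exact: (leq_trans (geq_minr _ _) (IH ir)).
Qed.

Lemma rhoLG_le (P : {set T}) : mopk P -> rhoLG <= #|P|.
Proof. move=> H; exact: (bigmin_le (fun P : {set T} => #|P|) #|T| H). Qed.

Lemma mopk_opk (P : {set T}) : mopk P -> opk P.
Proof. by case/andP. Qed.

Lemma rhoLG_att : exists2 P, mopk P & rhoLG = #|P|.
Proof.
case: rhoG_att => P0 HP0 eP0.
have M0 : mopk P0.
  apply/mopkP; split => // Q PQ; apply/negP => HQ.
  by have := rhoG_ge HQ; rewrite eP0 leqNgt (proper_card PQ).
have : (rhoLG == #|T|) || [exists P, mopk P && (rhoLG == #|P|)].
  rewrite /rhoLG.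
  apply: (big_ind (fun x => (x == #|T|) || [exists P, mopk P && (x == #|P|)])).
  - by rewrite eqxx.
  - by move=> x y Hx Hy; case: (leqP x y).
  - move=> P HP; apply/orP; right; apply/existsP; exists P; by rewrite HP eqxx.
case/orP => [/eqP E | /existsP [P /andP [HP /eqP E]]]; last by exists P.
exists P0 => //; apply/eqP; rewrite eqn_leq rhoLG_le //= E; exact: max_card.
Qed.

End Gen.

Section Transfer.
Variables (T1 T2 : finType) (c1 : rel T1) (c2 : rel T2) (f : T2 -> T1) (k : T1 -> T2).
Hypothesis fK : cancel f k.
Hypothesis Hcc : forall a b, c1 a b = c2 (k a) (k b).
Hypothesis Hconf : forall a b, k a = k b -> a != b -> c1 a b.

Lemma opk_f (Q : {set T2}) : opk c2 Q -> opk c1 (f @: Q).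
Proof.
move/opkP=> H; apply/opkP => _ _ /imsetP[a aQ ->] /imsetP[b bQ ->] nab.
rewrite Hcc !fK; apply: H => //.
by apply/eqP => eab; move: nab; rewrite eab eqxx.
Qed.

Lemma opk_k (P : {set T1}) : opk c1 P -> opk c2 (k @: P).
Proof.
move/opkP=> H; apply/opkP => _ _ /imsetP[a aP ->] /imsetP[b bP ->] nab.
rewrite -Hcc; apply: H => //.
by apply/eqP => eab; move: nab; rewrite eab eqxx.
Qed.

Lemma card_k (P : {set T1}) : opk c1 P -> #|k @: P| = #|P|.
Proof.
move/opkP=> H; apply: card_in_imset => a b aP bP kab.
apply/eqP; apply: contraT => nab.
by move: (H a b aP bP nab); rewrite (Hconf kab nab).
Qed.

Lemma card_f (Q : {set T2}) : #|f @: Q| = #|Q|.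
Proof. exact: card_imset (can_inj fK). Qed.

Lemma mopk_f (Q : {set T2}) : mopk c2 Q -> mopk c1 (f @: Q).
Proof.
case/mopkP => HQ HM; apply/mopkP; split; first exact: opk_f.
move=> R /properP [sub [x xR xnot]]; apply/negP => HR.
have H1 := opk_k HR.
have : ~~ opk c2 (k @: R).
  apply: HM; apply/properP; split.
    apply/subsetP => y yQ; apply/imsetP; exists (f y); last by rewrite fK.
    by apply: (subsetP sub); exact: imset_f.
  exists (k x); first exact: imset_f.
  apply/negP => kxQ.
  have fR : f (k x) \in R by apply: (subsetP sub); exact: imset_f.
  case: (eqVneq (f (k x)) x) => [ex|ne].
    by move: xnot; rewrite -ex imset_f.
  move/opkP: HR => HR.
  by move: (HR _ _ fR xR ne); rewrite (Hconf (fK (k x)) ne).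
by rewrite H1.
Qed.

Lemma mopk_k (P : {set T1}) : mopk c1 P -> mopk c2 (k @: P).
Proof.
case/mopkP => HP HM; apply/mopkP; split; first exact: opk_k.
move=> R /properP [sub [y yR ynot]]; apply/negP => HR.
pose S := P :|: f @: (R :\: k @: P).
have : ~~ opk c1 S.
  apply: HM; apply/properP; split; first exact: subsetUl.
  exists (f y).
    by rewrite inE; apply/orP; right; apply: imset_f; rewrite inE ynot yR.
  apply/negP => fyP; move: ynot; by rewrite -[y]fK imset_f.
apply/negP/negPn/opkP => u v; rewrite !inE => uS vS nuv.
move/opkP: HR => HR; move/opkP: HP => HP.
have kP z : z \in P -> k z \in R by move=> zP; apply: (subsetP sub); exact: imset_f.
case/orP: uS => [uP | /imsetP [a]]; case/orP: vS => [vP | /imsetP [b]].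
- exact: HP.
- rewrite inE => /andP [bn bR] ->; rewrite Hcc fK; apply: HR => //; first exact: kP.
  by apply/eqP => eb; move: bn; rewrite -eb imset_f.
- rewrite inE => /andP [an aR] ->; rewrite Hcc fK; apply: HR => //; first exact: kP.
  by apply/eqP => ea; move: an; rewrite ea imset_f.
- rewrite inE => /andP [an aR] eu; rewrite inE => /andP [bn bR] ev.
  rewrite eu ev Hcc !fK; apply: HR => //.
  by apply/eqP => eab; move: nuv; rewrite eu ev eab eqxx.
Qed.

Lemma transfer : rhoG c1 = rhoG c2 /\ rhoLG c1 = rhoLG c2.
Proof.
split; apply/eqP; rewrite eqn_leq; apply/andP; split.
- case: (rhoG_att c1) => P HP ->; rewrite -(card_k HP); exact: rhoG_ge (opk_k HP).
- case: (rhoG_att c2) => Q HQ ->; rewrite -(card_f Q); exact: rhoG_ge (opk_f HQ).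
- case: (rhoLG_att c2) => Q HQ ->; rewrite -(card_f Q); exact: rhoLG_le (mopk_f HQ).
- case: (rhoLG_att c1) => P HP ->; rewrite -(card_k (mopk_opk HP)).
  exact: rhoLG_le (mopk_k HP).
Qed.

End Transfer.

Definition cn (T : finType) (e : rel T) : rel T := fun u v => [exists x, e u x && e v x].

Lemma rho_oE (T : finType) (e : rel T) : rho_o e = rhoG (cn e).
Proof. reflexivity. Qed.
Lemma rho_oLE (T : finType) (e : rel T) : rho_oL e = rhoLG (cn e).
Proof. reflexivity. Qed.

Lemma inU_tr (T1 T2 : finType) (e1 : rel T1) (e2 : rel T2) (f : T2 -> T1) (k : T1 -> T2) :
  cancel f k -> (forall a b, cn e1 a b = cn e2 (k a) (k b)) ->
  (forall a b, k a = k b -> a != b -> cn e1 a b) -> in_U e1 = in_U e2.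
Proof.
move=> fK Hcc Hconf; case: (transfer fK Hcc Hconf) => E1 E2.
by rewrite /in_U !rho_oE !rho_oLE E1 E2.
Qed.

Lemma leafN (T : finType) (e : rel T) v s : leaf e v -> e v s -> forall y, e v y = (y == s).
Proof.
move=> /cards1P [a Ea] evs y.
have : s \in [set x | e v x] by rewrite inE.
rewrite Ea inE => /eqP sa.
by have := congr1 (fun A : {set T} => y \in A) Ea; rewrite !inE -sa.
Qed.

Theorem mainTheorem3 (T : finType) (e : rel T) :
  symmetric e -> irreflexive e ->
  (forall s : T, in_U e -> support_vertex e s -> in_U (add_pendant e s)) /\
  (forall s w : T, in_U e -> strong_support_vertex e s -> e s w -> leaf e w ->
     in_U (del_vertex e w)).
Proof.
move=> sym irr; split.
- move=> s HU /existsP [v0 /andP [esv Lv]].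
  have ev0s : e v0 s by rewrite sym.
  have L := leafN Lv ev0s.
  pose k (x : option T) := if x is Some a then a else v0.
  have key a y : add_pendant e s a (Some y) = e (k a) y.
    by case: a => [a|] //=; rewrite L.
  rewrite (@inU_tr _ _ _ e Some k) //.
  + move=> a b; apply/existsP/existsP.
      case=> [[y|]] /andP [h1 h2].
        by exists y; rewrite -!key h1 h2.
      case: a h1 => [a|] //= /eqP ->; case: b h2 => [b|] //= /eqP ->.
      by exists v0; rewrite /= esv.
    by case=> y /andP [h1 h2]; exists (Some y); rewrite !key h1 h2.
  + case=> [a|]; case=> [b|] //= kab nab.
    * by rewrite kab eqxx in nab.
    * by apply/existsP; exists (Some s); rewrite /= kab ev0s eqxx.
    * by apply/existsP; exists (Some s); rewrite /= -kab ev0s eqxx.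
- move=> s w HU /card_gt1P [x [y [xA yA nxy]]] esw Lw.
  have [v [vA vnw]] : exists v, v \in [set v | e s v && leaf e v] /\ v != w.
    case: (eqVneq x w) => [xw|xnw]; last by exists x.
    by exists y; split => //; rewrite -xw eq_sym.
  move: vA; rewrite inE => /andP [esv Lv].
  have Lw' := leafN Lw (etrans (sym _ _) esw).
  have Lv' := leafN Lv (etrans (sym _ _) esv).
  pose v' : {x : T | x != w} := exist _ v vnw.
  pose k := insubd v'.
  have kval a : val (k a) = if a == w then v else a.
    rewrite /k /insubd; case: insubP => [u Pa ea | nPa] /=.
      by rewrite (negbTE Pa).
    by rewrite negbK in nPa; rewrite nPa.
  have key a z : e (val (k a)) z = e a z.
    by rewrite kval; case: eqP => [->|//]; rewrite Lw' Lv'.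
  rewrite -(@inU_tr _ _ e (del_vertex e w) val k) //.
  + exact: valKd.
  + move=> a b; apply/existsP/existsP.
      case=> z /andP [h1 h2]; case: (eqVneq z w) => [zw|znw].
        move: h1 h2; rewrite zw -!(sym w) !Lw' => /eqP -> /eqP ->.
        by exists v'; rewrite /del_vertex !key /= esv.
      by exists (exist _ z znw); rewrite /del_vertex !key /= h1 h2.
    by case=> z; rewrite /del_vertex !key => h; exists (val z).
  + move=> a b kab nab; have := congr1 val kab; rewrite !kval.
    case: (eqVneq a w) => [aw|anw]; case: (eqVneq b w) => [bw|bnw] /= Hab;
      apply/existsP; exists s.
    * by rewrite aw bw eqxx in nab.
    * by rewrite aw -Hab (sym w) esw (sym v) esv.
    * by rewrite bw Hab (sym w) esw (sym v) esv.
    * by rewrite Hab eqxx in nab.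
Qed.
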